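(* Let $\mathcal{V}$ be a finite set of nodes, $\mathcal{P}$ a finite set of labels with $|\mathcal{P}|\ge 2$, $\mathcal{E}$ a set of unordered pairs of nodes, $\theta_{ip}\in\mathbb{R}$, and associative pairwise potentials $\theta_{ij}(p,q)=-C_{ij,p}[p=q]$ with $C_{ij,p}\ge0$. Let $$L(\vec{y},\vec{\lambda})=\sum_{i\in\mathcal{V}}\sum_{p\in\mathcal{P}}\theta_{ip}y_{ip}-\sum_{\{i,j\}\in\mathcal{E}}\sum_{p\in\mathcal{P}}C_{ij,p}\,y_{ip}y_{jp}+\sum_{i\in\mathcal{V}}\lambda_i\Big(\sum_{p\in\mathcal{P}}y_{ip}-1\Big)$$ for $\vec y\in\{0,1\}^{\mathcal V\times\mathcal P}$, $\vec\lambda\in\mathbb{R}^{\mathcal V}$. Consider the following coordinate ascent algorithm started from any $\vec\lambda_0$: set $\vec\lambda:=\vec\lambda_0$; repeat the following pass until a pass makes no change: for each node $j\in\mathcal V$, compute for every $p\in\mathcal P$ the quantity $\delta^j_p=MM_{jp,0}-MM_{jp,1}$, where $MM_{jp,k}=\min\{L(\vec y,\vec\lambda):y_{jp}=k\}$ (with the current $\vec\lambda$); let $\delta^j_{(1)}$ be the largest of the $\delta^j_p$ (attained at $p^{(1)}_j$) and $\delta^j_{(2)}$ the largest over $p\ne p^{(1)}_j$; if $\delta^j_{(1)}$ and $\delta^j_{(2)}$ are of the same sign (both positive or both negative), set $\lambda_j:=\lambda_j+\tfrac12(\delta^j_{(1)}+\delta^j_{(2)})$ and mark the pass as having made a change.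 Then the point $\vec\lambda$ returned by the algorithm (upon termination) satisfies the weak agreement condition.
   Context: For $\vec\lambda\in\mathbb{R}^{\mathcal V}$, $i\in\mathcal V$, $p\in\mathcal P$, define $Z_{ip}(\vec\lambda)=\{z\in\{0,1\}:\ \exists\,\vec y^{\vec\lambda}\in\operatorname{Argmin}_{\vec y\in\{0,1\}^{\mathcal V\times\mathcal P}}L(\vec y,\vec\lambda)\text{ with }y^{\vec\lambda}_{ip}=z\}$. A point $\vec\lambda$ satisfies the weak agreement condition if for every node $i\in\mathcal V$: (1) there exists $p\in\mathcal P$ with $1\in Z_{ip}(\vec\lambda)$; and (2) for every $p\in\mathcal P$, if $Z_{ip}(\vec\lambda)=\{1\}$ then $0\in Z_{iq}(\vec\lambda)$ for all $q\ne p$. *)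

(* Defs.v *)
From HB Require Import structures.
From mathcomp Require Import all_boot all_order all_algebra.
Set Implicit Arguments. Unset Strict Implicit. Unset Printing Implicit Defensive.
Import Order.TTheory GRing.Theory Num.Theory.
Local Open Scope ring_scope.

Section MRF.
Variables (R : realFieldType) (V P : finType).
Variable theta : V -> P -> R.
(* edges: unordered pairs {i,j} of nodes, represented as 2-element sets *)
Variable E : {set {set V}}.
Variable C : {set V} -> P -> R.

Definition labeling := {ffun V * P -> bool}.

Definition yv (y : labeling) (i : V) (p : P) : R := (y (i, p) : nat)%:R.

Definition L (y : labeling) (lam : V -> R) : R :=
  \sum_(i : V) \sum_(p : P) theta i p * yv y i p
  - \sum_(e in E) \sum_(p : P) C e p * \prod_(i in e) yv y i p
  + \sum_(i : V) lam i * (\sum_(p : P) yv y i p - 1).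

(* a labeling with y_{jp} = k (witness of feasibility) *)
Definition yfix (j : V) (p : P) (k : bool) : labeling :=
  [ffun x => if x == (j, p) then k else false].

Definition MM (lam : V -> R) (j : V) (p : P) (k : bool) : R :=
  \big[Num.min/L (yfix j p k) lam]_(y : labeling | y (j, p) == k) L y lam.

Definition delta (lam : V -> R) (j : V) (p : P) : R :=
  MM lam j p false - MM lam j p true.

Definition node_update (lam : V -> R) (j : V) : option (V -> R) :=
  match [pick p : P] with
  | None => None
  | Some p0 =>
    let p1 := Order.arg_max p0 predT (delta lam j) in
    match [pick q : P | q != p1] with
    | None => None
    | Some q0 =>
      let p2 := Order.arg_max q0 (fun q => q != p1) (delta lam j) in
      let d1 := delta lam j p1 in
      let d2 := delta lam j p2 in
      if ((0 < d1) && (0 < d2)) || ((d1 < 0) && (d2 < 0)) then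
        Some (fun v => if v == j then lam j + (d1 + d2) / 2 else lam v)
      else None
    end
  end.

Definition pass_step (st : (V -> R) * bool) (j : V) : (V -> R) * bool :=
  match node_update st.1 j with
  | Some lam' => (lam', true)
  | None => st
  end.

Definition pass (ord : seq V) (lam : V -> R) : (V -> R) * bool :=
  foldl pass_step (lam, false) ord.

(* returns ord lam0 lam : the algorithm started at lam0 terminates and
   returns lam *)
Inductive returns (ord : seq V) : (V -> R) -> (V -> R) -> Prop :=
  | returns_stop lam0 : (pass ord lam0).2 = false ->
      returns ord lam0 (pass ord lam0).1
  | returns_cont lam0 lam : (pass ord lam0).2 = true ->
      returns ord (pass ord lam0).1 lam -> returns ord lam0 lam.

Definition is_argmin (lam : V -> R) (y : labeling) : Prop :=
  forall y' : labeling, L y lam <= L y' lam.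

Definition Zset (lam : V -> R) (i : V) (p : P) (z : bool) : Prop :=
  exists y : labeling, is_argmin lam y /\ y (i, p) = z.

Definition weak_agreement (lam : V -> R) : Prop :=
  forall i : V,
    (exists p : P, Zset lam i p true) /\
    (forall p : P, (Zset lam i p true /\ ~ Zset lam i p false) ->
       forall q : P, q != p -> Zset lam i q false).

End MRF.

(* Main.v *)
Require Import Defs.
From HB Require Import structures.
From mathcomp Require Import all_boot all_order all_algebra.
Import Order.TTheory GRing.Theory Num.Theory.
Local Open Scope ring_scope.
Set Implicit Arguments.

Section Proofs.
Variables (R : realFieldType) (V P : finType).
Variables (theta : V -> P -> R) (E : {set {set V}}) (C : {set V} -> P -> R).

Notation LL := (L theta E C).
Notation MMM := (MM theta E C).

Lemma MM_le lam j p k (y : labeling V P) : y (j, p) = k -> MMM lam j p k <= LL y lam.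
Proof.
move=> Hy; rewrite /MM (bigD1 y) /=; last by rewrite Hy.
by rewrite ge_min lexx.
Qed.

Lemma MM_att lam j p k : exists y : labeling V P, y (j, p) = k /\ LL y lam = MMM lam j p k.
Proof.
rewrite /MM.
apply: (big_ind (fun x => exists y : labeling V P, y (j, p) = k /\ LL y lam = x)).
- by exists (yfix j p k); rewrite /yfix ffunE eqxx.
- move=> x1 x2 [y1 [H1 E1]] [y2 [H2 E2]].
  case: (leP x1 x2) => _; [by exists y1 | by exists y2].
- by move=> y /eqP Hy; exists y.
Qed.

Lemma Zset_iff lam j p k :
  Zset theta E C lam j p k <-> MMM lam j p k <= MMM lam j p (~~ k).
Proof.
split.
- move=> [y [Hmin Hy]].
  have [y' [Hy' E']] := MM_att lam j p (~~ k).
  apply: (@le_trans _ _ (LL y lam)); first exact: MM_le.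
  rewrite -E'; exact: Hmin.
- move=> Hle.
  have [y [Hy Ey]] := MM_att lam j p k.
  exists y; split => // y'.
  rewrite Ey.
  case Hk: (y' (j, p) == k).
  + by apply: MM_le; apply/eqP.
  + apply: (le_trans Hle); apply: MM_le.
    by move: Hk; case: (y' (j, p)); case: (k).
Qed.

Lemma Z1 lam j p : Zset theta E C lam j p true <-> 0 <= delta theta E C lam j p.
Proof. rewrite /delta subr_ge0; exact: Zset_iff. Qed.

Lemma Z0 lam j p : Zset theta E C lam j p false <-> delta theta E C lam j p <= 0.
Proof. rewrite /delta subr_le0; exact: Zset_iff. Qed.

Lemma fold_false (s : seq V) (st : (V -> R) * bool) :
  (foldl (pass_step theta E C) st s).2 = false ->
  [/\ st.2 = false, (foldl (pass_step theta E C) st s).1 = st.1 &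
     forall j, j \in s -> node_update theta E C st.1 j = None].
Proof.
elim: s st => [|x s IH] st /=; first by move=> H; split.
move=> /IH [H1 H2 H3].
have Hx : node_update theta E C st.1 x = None.
  by move: H1; rewrite /pass_step; case: (node_update _ _ _ _ _).
have Hst : pass_step theta E C st x = st by rewrite /pass_step Hx.
rewrite Hst in H1 H2 H3 *; split => // j; rewrite inE => /orP [/eqP -> //|]; exact: H3.
Qed.

Lemma returns_final ord lam0 lam : returns theta E C ord lam0 lam ->
  exists l, (pass theta E C ord l).2 = false /\ lam = (pass theta E C ord l).1.
Proof.
elim => [l H | l l' _ _ IH] //; by exists l.
Qed.

Lemma node_none lam j : (1 < #|P|)%N -> node_update theta E C lam j = None ->
  exists p1 d2, [/\ forall p, delta theta E C lam j p <= delta theta E C lam j p1,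
    forall q, q != p1 -> delta theta E C lam j q <= d2,
    0 <= delta theta E C lam j p1 & d2 <= 0].
Proof.
move=> HP; rewrite /node_update.
case: pickP => [p0 _|H0]; last first.
  by move: HP; rewrite (eq_card0 H0).
set p1 := Order.arg_max p0 predT (delta theta E C lam j).
have D1 : forall p, delta theta E C lam j p <= delta theta E C lam j p1.
  rewrite /p1; case: arg_maxP => // i _ Hi p; exact: Hi.
case: pickP => [q0 Hq0|Hn]; last first.
  have : (#|P| <= 1)%N.
    rewrite -(card1 p1); apply: subset_leq_card; apply/subsetP => x _.
    by move: (Hn x); rewrite /= inE => /negbFE.
  by rewrite leqNgt HP.
set p2 := Order.arg_max q0 (fun q => q != p1) (delta theta E C lam j).
have D2 : forall q, q != p1 -> delta theta E C lam j q <= delta theta E C lam j p2.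
  rewrite /p2; case: arg_maxP => // i _ Hi p; exact: Hi.
have D12 : delta theta E C lam j p2 <= delta theta E C lam j p1 by apply: D1.
case: ifP => // Hc _.
exists p1, (delta theta E C lam j p2); split => //.
- rewrite leNgt; apply/negP => Hlt.
  have Hlt2 := le_lt_trans D12 Hlt.
  by move: Hc; rewrite Hlt Hlt2 orbT.
- rewrite leNgt; apply/negP => Hlt.
  have H1 := lt_le_trans Hlt D12.
  by move: Hc; rewrite Hlt H1.
Qed.

End Proofs.

Theorem theorem3 (R : realFieldType) (V P : finType)
  (theta : V -> P -> R) (E : {set {set V}}) (C : {set V} -> P -> R)
  (ord : seq V) (lam0 lam : V -> R) :
  (1 < #|P|)%N ->
  (forall e, e \in E -> #|e| = 2%N) ->
  (forall e p, e \in E -> 0 <= C e p) ->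
  perm_eq ord (enum V) ->
  returns theta E C ord lam0 lam ->
  weak_agreement theta E C lam.
Proof.
move=> HP _ _ Hperm Hret.
have [l [Hf ->]] := returns_final Hret.
have [_ Hfe Hn] := @fold_false _ _ _ theta E C ord (l, false) Hf.
rewrite /pass Hfe /=.
move=> i /=.
have Hi : node_update theta E C l i = None.
  by apply: Hn; rewrite (perm_mem Hperm) mem_enum.
have [p1 [d2 [D1 D2 H1 H2]]] := @node_none _ _ _ theta E C l i HP Hi.
split.
- by exists p1; apply/Z1.
- move=> p [/Z1 Hp1 /Z0 Hp0] q Hq; apply/Z0.
  have Hpp : p = p1.
    apply/eqP; apply/negP => /negP Hne.
    apply: Hp0; apply: (le_trans (D2 _ Hne) H2).
  by subst p; apply: (le_trans (D2 _ Hq) H2).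
Qed.
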